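(* Let $u\geqslant1$ and $b\geqslant 8u+24$ be integers. There exists a set $\mathfrak{A}$ of $u$ integer $3\times3$ matrices such that the multiset of absolute values of all entries of all matrices in $\mathfrak{A}$ is exactly the set $$[9,2u+7]_2\cup[10,4u+6]_4\cup[2u+17,6u+15]_2\cup[6u+25,8u+23]_2\cup[b,b+u-1]\cup[b+u+8,b+2u+7]\cup[b+5u+16,b+6u+15]\cup[b+8u+32,b+9u+31]$$ (each element occurring once), and $\sigma_r(A)=\sigma_c(A)=(0,0,0)$ for every $A\in\mathfrak{A}$.
   Context: For integers $a\equiv b\pmod d$ with $d\geqslant1$, $[a,b]_d=\{a+id: 0\leqslant i\leqslant (b-a)/d\}$ if $a\leqslant b$ and $[a,b]_d=\varnothing$ if $a>b$; $[a,b]=[a,b]_1$. For a matrix $A$, $\sigma_r(A)$ is the sequence of its row sums and $\sigma_c(A)$ the sequence of its column sums. *)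

(* Defs.v *)
From mathcomp Require Import all_boot all_order all_algebra.
Set Implicit Arguments. Unset Strict Implicit. Unset Printing Implicit Defensive.
Import GRing.Theory Num.Theory.

Definition ivl (a b d : nat) : seq nat :=
  if a <= b then [seq a + i * d | i <- iota 0 ((b - a) %/ d).+1] else [::].

Definition target (u b : nat) : seq nat :=
  ivl 9 (2*u+7) 2 ++ ivl 10 (4*u+6) 4 ++ ivl (2*u+17) (6*u+15) 2
  ++ ivl (6*u+25) (8*u+23) 2 ++ ivl b (b+u-1) 1 ++ ivl (b+u+8) (b+2*u+7) 1
  ++ ivl (b+5*u+16) (b+6*u+15) 1 ++ ivl (b+8*u+32) (b+9*u+31) 1.

Definition abs_entries (u : nat) (A : 'I_u -> 'M[int]_3) : seq nat :=
  [seq n <- [seq absz (A k ij.1 ij.2) | k <- enum 'I_u, ij <- enum {: 'I_3 * 'I_3}]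
   | n != 0%N].

Definition zero_sums (A : 'M[int]_3) : Prop :=
  (forall i : 'I_3, (\sum_(j < 3) A i j)%R = 0%R) /\ (forall j : 'I_3, (\sum_(i < 3) A i j)%R = 0%R).

(* Main.v *)
Require Import Defs.
From mathcomp Require Import all_boot all_order all_algebra.
From mathcomp Require Import zify.
Import GRing.Theory Num.Theory.

Definition blk (a d m : nat) : seq nat := [seq a + i * d | i <- iota 0 m].

Lemma ivlE a n d : (0 < d)%N -> ivl a (a + n * d) d = blk a d n.+1.
Proof.
move=> d0; rewrite /ivl leq_addr addKn mulnK //.
Qed.

Lemma blkP x a d m : x \in blk a d m -> exists i, (i < m)%N /\ x = a + i * d.
Proof.
case/mapP=> i; rewrite mem_iota add0n => /andP[_ Hi] ->; by exists i.
Qed.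

Lemma blk_mem i a d m : (i < m)%N -> a + i * d \in blk a d m.
Proof. by move=> Hi; apply/mapP; exists i; rewrite // mem_iota. Qed.

Lemma blk_uniq a d m : (0 < d)%N -> uniq (blk a d m).
Proof.
move=> d0; rewrite map_inj_uniq ?iota_uniq // => i j /eqP.
by rewrite eqn_add2l eqn_pmul2r // => /eqP.
Qed.

Lemma cat_uniq2 (s1 s2 : seq nat) : uniq s1 -> uniq s2 ->
  (forall x, x \in s1 -> x \in s2 -> False) -> uniq (s1 ++ s2).
Proof.
move=> u1 u2 H; rewrite cat_uniq u1 u2 andbT /=.
apply/hasPn => x x2; apply/negP => x1; exact: (H x x1 x2).
Qed.

Definition ent (u b k p q : nat) : int :=
  match p, q with
  | 0, 0 => Posz (b + k)
  | 0, 1 => - Posz (b + 2*u + 7 - k)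
  | 0, _ => Posz (2*u + 7 - 2*k)
  | 1, 0 => - Posz (b + 6*u + 15 - k)
  | 1, 1 => Posz (b + 8*u + 32 + k)
  | 1, _ => - Posz (2*u + 17 + 2*k)
  | _, 0 => Posz (6*u + 15 - 2*k)
  | _, 1 => - Posz (6*u + 25 + 2*k)
  | _, _ => Posz (4*k + 10)
  end.

Definition Amat (u b : nat) (k : 'I_u) : 'M[int]_3 :=
  \matrix_(p < 3, q < 3) ent u b k p q.

Theorem lemma2p2 (u b : nat) :
  (1 <= u)%N -> (8 * u + 24 <= b)%N ->
  exists A : 'I_u -> 'M[int]_3,
    injective A /\
    perm_eq (abs_entries A) (target u b) /\
    (forall k : 'I_u, zero_sums (A k)).
Proof.
move=> u1 hb; exists (Amat u b); split.
  move=> k1 k2 /(congr1 (fun M : 'M[int]_3 => M ord0 ord0)); rewrite !mxE /ent /=.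
  case=> /eqP; rewrite eqn_add2l => /eqP; exact: val_inj.
have hT : target u b = blk 9 2 u ++ blk 10 4 u ++ blk (2*u+17) 2 (2*u)
   ++ blk (6*u+25) 2 u ++ blk b 1 u ++ blk (b+u+8) 1 u
   ++ blk (b+5*u+16) 1 u ++ blk (b+8*u+32) 1 u.
  case: u u1 hb => // n _ hb.
  rewrite /target.
  have -> : 2 * n.+1 + 7 = 9 + n * 2 by lia.
  have -> : 4 * n.+1 + 6 = 10 + n * 4 by lia.
  have -> : 6 * n.+1 + 15 = 2 * n.+1 + 17 + (2 * n).+1 * 2 by lia.
  have -> : 8 * n.+1 + 23 = 6 * n.+1 + 25 + n * 2 by lia.
  have -> : b + n.+1 - 1 = b + n * 1 by lia.
  have -> : b + 2 * n.+1 + 7 = b + n.+1 + 8 + n * 1 by lia.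
  have -> : b + 6 * n.+1 + 15 = b + 5 * n.+1 + 16 + n * 1 by lia.
  have -> : b + 9 * n.+1 + 31 = b + 8 * n.+1 + 32 + n * 1 by lia.
  rewrite !ivlE //.
  have -> : (2 * n).+2 = 2 * n.+1 by lia.
  done.
have Tu : uniq (target u b).
{ rewrite hT.
  repeat apply: cat_uniq2; try exact: blk_uniq.
  all: move=> x /blkP[i [Hi ->]]; rewrite ?mem_cat => H.
  all: repeat (case/orP: H => H).
  all: case/blkP: H => j [Hj E]; lia. }
have Hmem : forall (k : 'I_u) (p q : 'I_3), absz (Amat u b k p q) != 0 ->
    absz (Amat u b k p q) \in abs_entries (Amat u b).
  move=> k p q nz; rewrite /abs_entries mem_filter nz /=.
  apply/allpairsP; exists (k, (p, q)); by rewrite !mem_enum.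
have Hsub : {subset target u b <= abs_entries (Amat u b)}.
  move=> x; rewrite hT !mem_cat => H.
  repeat (case/orP: H => H).
  - case/blkP: H => i [Hi ->].
    have Hk : (u - 1 - i < u)%N by lia.
    have := Hmem (Ordinal Hk) (@Ordinal 3 0 isT) (@Ordinal 3 2 isT); rewrite !mxE /ent /= ?abszN /= => H.
    have E : 9 + i * 2 = 2 * u + 7 - 2 * (u - 1 - i) by lia.
    rewrite E; apply: H; lia.
  - case/blkP: H => i [Hi ->].
    have := Hmem (Ordinal Hi) (@Ordinal 3 2 isT) (@Ordinal 3 2 isT); rewrite !mxE /ent /= ?abszN /= => H.
    have E : 10 + i * 4 = 4 * i + 10 by lia.
    rewrite E; apply: H; lia.
  - case/blkP: H => i [Hi ->].
    case: (ltnP i u) => Hiu.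
      have := Hmem (Ordinal Hiu) (@Ordinal 3 1 isT) (@Ordinal 3 2 isT); rewrite !mxE /ent /= ?abszN /= => H.
      have E : 2 * u + 17 + i * 2 = 2 * u + 17 + 2 * i by lia.
      rewrite E; apply: H; lia.
    have Hk : (u - 1 - (i - u) < u)%N by lia.
    have := Hmem (Ordinal Hk) (@Ordinal 3 2 isT) (@Ordinal 3 0 isT); rewrite !mxE /ent /= ?abszN /= => H.
    have E : 2 * u + 17 + i * 2 = 6 * u + 15 - 2 * (u - 1 - (i - u)) by lia.
    rewrite E; apply: H; lia.
  - case/blkP: H => i [Hi ->].
    have := Hmem (Ordinal Hi) (@Ordinal 3 2 isT) (@Ordinal 3 1 isT); rewrite !mxE /ent /= ?abszN /= => H.
    have E : 6 * u + 25 + i * 2 = 6 * u + 25 + 2 * i by lia.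
    rewrite E; apply: H; lia.
  - case/blkP: H => i [Hi ->].
    have := Hmem (Ordinal Hi) (@Ordinal 3 0 isT) (@Ordinal 3 0 isT); rewrite !mxE /ent /= ?abszN /= => H.
    have E : b + i * 1 = b + i by lia.
    rewrite E; apply: H; lia.
  - case/blkP: H => i [Hi ->].
    have Hk : (u - 1 - i < u)%N by lia.
    have := Hmem (Ordinal Hk) (@Ordinal 3 0 isT) (@Ordinal 3 1 isT); rewrite !mxE /ent /= ?abszN /= => H.
    have E : b + u + 8 + i * 1 = b + 2 * u + 7 - (u - 1 - i) by lia.
    rewrite E; apply: H; lia.
  - case/blkP: H => i [Hi ->].
    have Hk : (u - 1 - i < u)%N by lia.
    have := Hmem (Ordinal Hk) (@Ordinal 3 1 isT) (@Ordinal 3 0 isT); rewrite !mxE /ent /= ?abszN /= => H.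
    have E : b + 5 * u + 16 + i * 1 = b + 6 * u + 15 - (u - 1 - i) by lia.
    rewrite E; apply: H; lia.
  - case/blkP: H => i [Hi ->].
    have := Hmem (Ordinal Hi) (@Ordinal 3 1 isT) (@Ordinal 3 1 isT); rewrite !mxE /ent /= ?abszN /= => H.
    have E : b + 8 * u + 32 + i * 1 = b + 8 * u + 32 + i by lia.
    rewrite E; apply: H; lia.
have Hsz : (size (abs_entries (Amat u b)) <= size (target u b))%N.
  rewrite /abs_entries size_filter; apply: (leq_trans (count_size _ _)).
  rewrite size_allpairs size_enum_ord -cardE card_prod !card_ord hT.
  rewrite !size_cat /blk !size_map !size_iota; lia.
split.
  rewrite perm_sym; apply: uniq_perm => //.
    exact: (leq_size_uniq Tu Hsub Hsz).
  exact: (uniq_min_size Tu Hsub Hsz).2.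
move=> k; split=> i; rewrite !big_ord_recr big_ord0 /= !mxE /=;
  case: i => [[|[|[|?]]] ?] //=; have := ltn_ord k; lia.
Qed.
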